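(* Let $\{R_i\}_{i}$ be an arbitrary family of avoidance rings and $R=\prod_i R_i$. Then $R$ is an avoidance ring if and only if $R/I$ is an avoidance ring, where $I=\bigoplus_i R_i\subseteq R$ is the ideal of elements with only finitely many nonzero coordinates.
   Context: All rings are commutative with $1\neq 0$. An ideal $I$ of a ring $R$ has avoidance if whenever $I_1,\ldots,I_n$ are finitely many ideals of $R$ with $I\subseteq\bigcup_{k=1}^n I_k$, then $I\subseteq I_k$ for some $k$. A ring is an avoidance ring if every ideal of it has avoidance. *)

(* Defs.v *)
From HB Require Import structures.
From mathcomp Require Import all_boot all_order all_algebra.
From mathcomp Require Import generic_quotient ring.
From mathcomp Require Import boolp classical_sets cardinality.

Set Implicit Arguments.
Unset Strict Implicit.
Unset Printing Implicit Defensive.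

Import GRing.Theory.
Local Open Scope ring_scope.
Local Open Scope classical_set_scope.
Local Open Scope quotient_scope.

(* Ideals and avoidance.  Rings are commutative (comPzRingType; the
   zero ring is allowed only so that degenerate quotients/products,
   e.g. R/I with I = R, are still rings).               *)

Definition is_ideal (R : comPzRingType) (J : set R) : Prop :=
  [/\ J 0,
      (forall x y, J x -> J y -> J (x + y)) &
      (forall r x, J x -> J (r * x))].

Definition has_avoidance (R : comPzRingType) (J : set R) : Prop :=
  forall (n : nat) (K : 'I_n -> set R),
    (forall k, is_ideal (K k)) ->
    J `<=` \bigcup_(k in [set: 'I_n]) K k ->
    exists k : 'I_n, J `<=` K k.

Definition avoidance_ring (R : comPzRingType) : Prop :=
  forall J : set R, is_ideal J -> has_avoidance J.

(* Bundled ideals (needed to form quotient rings). *)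
Record ideal (R : comPzRingType) := Ideal {
  ideal_set : set R;
  ideal_isP : is_ideal ideal_set }.

Definition quot_rel (R : comPzRingType) (J : ideal R) : rel R :=
  fun x y => `[< ideal_set J (x - y) >].

Lemma ideal0 (R : comPzRingType) (J : ideal R) : ideal_set J 0.
Proof. by case: (ideal_isP J). Qed.

Lemma idealD (R : comPzRingType) (J : ideal R) x y : ideal_set J x -> ideal_set J y -> ideal_set J (x + y).
Proof. by case: (ideal_isP J) => _ H _; apply: H. Qed.

Lemma idealM (R : comPzRingType) (J : ideal R) r x : ideal_set J x -> ideal_set J (r * x).
Proof. by case: (ideal_isP J) => _ _ H; apply: H. Qed.

Lemma idealN (R : comPzRingType) (J : ideal R) x : ideal_set J x -> ideal_set J (- x).
Proof. by move=> Jx; rewrite -mulN1r; apply: idealM. Qed.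

Lemma quot_rel_is_equiv (R : comPzRingType) (J : ideal R) :
  equiv_class_of (quot_rel J).
Proof.
split=> [x|x y|y x z]; rewrite /quot_rel.
- by apply/asboolP; rewrite subrr; apply: ideal0.
- by apply/asboolP/asboolP => H; rewrite -opprB; apply: idealN.
- move=> /asboolP Hxy /asboolP Hyz; apply/asboolP.
  by rewrite -[x](addrNK y) -addrA; apply: idealD.
Qed.

Canonical quot_rel_equiv (R : comPzRingType) (J : ideal R) :=
  EquivRelPack (quot_rel_is_equiv J).
Canonical quot_rel_encModRel (R : comPzRingType) (J : ideal R) :=
  defaultEncModRel (quot_rel J).

Definition rquot (R : comPzRingType) (J : ideal R) := {eq_quot quot_rel J}.

HB.instance Definition _ (R : comPzRingType) (J : ideal R) :
  EqQuotient R (quot_rel J) (rquot J) := EqQuotient.on (rquot J).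
HB.instance Definition _ (R : comPzRingType) (J : ideal R) :=
  Choice.on (rquot J).

Lemma rquot_eqE (R : comPzRingType) (J : ideal R) (x y : R) :
  (x == y %[mod rquot J]) = `[< ideal_set J (x - y) >].
Proof. by rewrite piE. Qed.

Definition rq_zero (R : comPzRingType) (J : ideal R) : rquot J :=
  lift_cst (rquot J) 0.
Definition rq_add (R : comPzRingType) (J : ideal R) :=
  lift_op2 (rquot J) +%R.
Definition rq_opp (R : comPzRingType) (J : ideal R) :=
  lift_op1 (rquot J) -%R.
Definition rq_one (R : comPzRingType) (J : ideal R) : rquot J :=
  lift_cst (rquot J) 1.
Definition rq_mul (R : comPzRingType) (J : ideal R) :=
  lift_op2 (rquot J) *%R.

Arguments rq_add {R} J.
Arguments rq_opp {R} J.
Arguments rq_mul {R} J.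

Canonical rq_pi_zero_morph (R : comPzRingType) (J : ideal R) :=
  PiConst (rq_zero J).
Canonical rq_pi_one_morph (R : comPzRingType) (J : ideal R) :=
  PiConst (rq_one J).

Lemma rq_reprP (R : comPzRingType) (J : ideal R) (x : R) :
  ideal_set J (repr (\pi_(rquot J) x) - x).
Proof.
by have /eqP := reprK (\pi_(rquot J) x); rewrite rquot_eqE => /asboolP.
Qed.

Lemma rq_pi_opp (R : comPzRingType) (J : ideal R) :
  {morph \pi_(rquot J) : x / - x >-> rq_opp J x}.
Proof.
move=> x; unlock rq_opp; apply/eqP; rewrite rquot_eqE; apply/asboolP.
by rewrite opprK addrC; apply: rq_reprP.
Qed.
Canonical rq_pi_opp_morph (R : comPzRingType) (J : ideal R) :=
  PiMorph1 (rq_pi_opp J).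

Lemma rq_pi_add (R : comPzRingType) (J : ideal R) :
  {morph \pi_(rquot J) : x y / x + y >-> rq_add J x y}.
Proof.
move=> x y; unlock rq_add; apply/eqP; rewrite rquot_eqE; apply/asboolP.
have Hx := rq_reprP J x; have Hy := rq_reprP J y.
have -> : x + y - (repr (\pi_(rquot J) x) + repr (\pi_(rquot J) y)) =
  - ((repr (\pi_(rquot J) x) - x) + (repr (\pi_(rquot J) y) - y)).
  by ring.
by apply: idealN; apply: idealD.
Qed.
Canonical rq_pi_add_morph (R : comPzRingType) (J : ideal R) :=
  PiMorph2 (rq_pi_add J).

Lemma rq_pi_mul (R : comPzRingType) (J : ideal R) :
  {morph \pi_(rquot J) : x y / x * y >-> rq_mul J x y}.
Proof.
move=> x y; unlock rq_mul; apply/eqP; rewrite rquot_eqE; apply/asboolP.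
set a := repr (\pi_(rquot J) x); set b := repr (\pi_(rquot J) y).
have Hx : ideal_set J (a - x) := rq_reprP J x; have Hy : ideal_set J (b - y) := rq_reprP J y.
have -> : x * y - a * b = - ((a - x) * y + a * (b - y)).
  by ring.
by apply: idealN; apply: idealD; [rewrite mulrC|]; apply: idealM.
Qed.
Canonical rq_pi_mul_morph (R : comPzRingType) (J : ideal R) :=
  PiMorph2 (rq_pi_mul J).

Lemma rq_addA (R : comPzRingType) (J : ideal R) : associative (rq_add J).
Proof. by move=> x y z; rewrite -[x]reprK -[y]reprK -[z]reprK !piE addrA. Qed.
Lemma rq_addC (R : comPzRingType) (J : ideal R) : commutative (rq_add J).
Proof. by move=> x y; rewrite -[x]reprK -[y]reprK !piE addrC. Qed.
Lemma rq_add0 (R : comPzRingType) (J : ideal R) : left_id (rq_zero J) (rq_add J).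
Proof. by move=> x; rewrite -[x]reprK !piE add0r. Qed.
Lemma rq_addN (R : comPzRingType) (J : ideal R) :
  left_inverse (rq_zero J) (rq_opp J) (rq_add J).
Proof. by move=> x; rewrite -[x]reprK !piE addNr. Qed.

HB.instance Definition _ (R : comPzRingType) (J : ideal R) :=
  GRing.isZmodule.Build (rquot J) (@rq_addA R J) (@rq_addC R J)
    (@rq_add0 R J) (@rq_addN R J).

Lemma rq_mulA (R : comPzRingType) (J : ideal R) : associative (rq_mul J).
Proof. by move=> x y z; rewrite -[x]reprK -[y]reprK -[z]reprK !piE mulrA. Qed.
Lemma rq_mulC (R : comPzRingType) (J : ideal R) : commutative (rq_mul J).
Proof. by move=> x y; rewrite -[x]reprK -[y]reprK !piE mulrC. Qed.
Lemma rq_mul1 (R : comPzRingType) (J : ideal R) : left_id (rq_one J) (rq_mul J).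
Proof. by move=> x; rewrite -[x]reprK !piE mul1r. Qed.
Lemma rq_mulDl (R : comPzRingType) (J : ideal R) :
  left_distributive (rq_mul J) (rq_add J).
Proof.
by move=> x y z; rewrite -[x]reprK -[y]reprK -[z]reprK !piE mulrDl.
Qed.

HB.instance Definition _ (R : comPzRingType) (J : ideal R) :=
  GRing.Zmodule_isComPzRing.Build (rquot J) (@rq_mulA R J) (@rq_mulC R J)
    (@rq_mul1 R J) (@rq_mulDl R J).

Definition dprod (I : Type) (R : I -> comNzRingType) := forall i, R i.

HB.instance Definition _ (I : Type) (R : I -> comNzRingType) :=
  Choice.on (dprod R).

Definition dp_zero I (R : I -> comNzRingType) : dprod R := fun i => 0.
Definition dp_one I (R : I -> comNzRingType) : dprod R := fun i => 1.
Definition dp_add I (R : I -> comNzRingType) (x y : dprod R) : dprod R :=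
  fun i => x i + y i.
Definition dp_opp I (R : I -> comNzRingType) (x : dprod R) : dprod R :=
  fun i => - x i.
Definition dp_mul I (R : I -> comNzRingType) (x y : dprod R) : dprod R :=
  fun i => x i * y i.

Lemma dp_addA I (R : I -> comNzRingType) : associative (@dp_add I R).
Proof. by move=> x y z; apply: functional_extensionality_dep => i; apply: addrA. Qed.
Lemma dp_addC I (R : I -> comNzRingType) : commutative (@dp_add I R).
Proof. by move=> x y; apply: functional_extensionality_dep => i; apply: addrC. Qed.
Lemma dp_add0 I (R : I -> comNzRingType) : left_id (@dp_zero I R) (@dp_add I R).
Proof. by move=> x; apply: functional_extensionality_dep => i; apply: add0r. Qed.
Lemma dp_addN I (R : I -> comNzRingType) :
  left_inverse (@dp_zero I R) (@dp_opp I R) (@dp_add I R).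
Proof. by move=> x; apply: functional_extensionality_dep => i; apply: addNr. Qed.

HB.instance Definition _ I (R : I -> comNzRingType) :=
  GRing.isZmodule.Build (dprod R) (@dp_addA I R) (@dp_addC I R)
    (@dp_add0 I R) (@dp_addN I R).

Lemma dp_mulA I (R : I -> comNzRingType) : associative (@dp_mul I R).
Proof. by move=> x y z; apply: functional_extensionality_dep => i; apply: mulrA. Qed.
Lemma dp_mulC I (R : I -> comNzRingType) : commutative (@dp_mul I R).
Proof. by move=> x y; apply: functional_extensionality_dep => i; apply: mulrC. Qed.
Lemma dp_mul1 I (R : I -> comNzRingType) : left_id (@dp_one I R) (@dp_mul I R).
Proof. by move=> x; apply: functional_extensionality_dep => i; apply: mul1r. Qed.
Lemma dp_mulDl I (R : I -> comNzRingType) :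
  left_distributive (@dp_mul I R) (@dp_add I R).
Proof. by move=> x y z; apply: functional_extensionality_dep => i; apply: mulrDl. Qed.

HB.instance Definition _ I (R : I -> comNzRingType) :=
  GRing.Zmodule_isComPzRing.Build (dprod R) (@dp_mulA I R) (@dp_mulC I R)
    (@dp_mul1 I R) (@dp_mulDl I R).

Definition support I (R : I -> comNzRingType) (x : dprod R) : set I :=
  [set i | x i != 0].

Definition dsum_set I (R : I -> comNzRingType) : set (dprod R) :=
  [set x | finite_set (support x)].
Arguments dsum_set {I} R _.

Lemma dsum_is_ideal I (R : I -> comNzRingType) : is_ideal (dsum_set R).
Proof.
split.
- rewrite /dsum_set /support /=.
  have -> : [set i | (0 : dprod R) i != 0] = set0.
    by apply/seteqP; split => i //=; rewrite eqxx.
  exact: finite_set0.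
- move=> x y; rewrite /dsum_set /= => Hx Hy.
  have HU : finite_set (support x `|` support y) by rewrite finite_setU.
  apply: (sub_finite_set _ HU) => i; rewrite /support /=.
  case: (eqVneq (x i) 0) => [Hx0|]; last by left.
  move=> H; right; move: H; change ((x + y) i) with (x i + y i).
  by rewrite Hx0 add0r.
- move=> r x; rewrite /dsum_set /= => Hx.
  apply: (sub_finite_set _ Hx) => i; rewrite /support /=.
  by apply: contraNN => /eqP Hi; change ((r * x) i) with (r i * x i); rewrite Hi mulr0.
Qed.

Definition dsum_ideal I (R : I -> comNzRingType) : ideal (dprod R) :=
  Ideal (dsum_is_ideal R).

(* Main.v *)
Require Import Defs.
From HB Require Import structures.
From mathcomp Require Import all_boot all_order all_algebra.
From mathcomp Require Import generic_quotient ring.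
From mathcomp Require Import boolp classical_sets cardinality.

Set Implicit Arguments.
Unset Strict Implicit.
Unset Printing Implicit Defensive.

Import GRing.Theory.
Local Open Scope ring_scope.
Local Open Scope classical_set_scope.
Local Open Scope quotient_scope.

Lemma idN (R0 : comPzRingType) (J : set R0) x : is_ideal J -> J x -> J (- x).
Proof. by case=> _ _ HM Jx; rewrite -mulN1r; apply: HM. Qed.

Lemma avoid_ex (R0 : comPzRingType) (J : set R0) n (K : 'I_n -> set R0)
  (P : 'I_n -> Prop) : is_ideal J -> has_avoidance J ->
  (forall k, is_ideal (K k)) -> (forall k, P k -> ~ (J `<=` K k)) ->
  exists x, J x /\ forall k, P k -> ~ K k x.
Proof.
move=> HJ HA HK HP.
case: (pselect (exists k0, P k0)) => [[k0 Pk0]|NP]; last first.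
  exists 0; split; first by case: HJ.
  by move=> k Pk _; apply: NP; exists k.
apply: contrapT => Hno.
pose K' k := if `[< P k >] then K k else K k0.
have HK' : forall k, is_ideal (K' k) by move=> k; rewrite /K'; case: ifP.
have [k Hk] : exists k, J `<=` K' k.
  apply: HA => // x Jx; apply: contrapT => Hx; apply: Hno; exists x; split => //.
  move=> k Pk Kx; apply: Hx; exists k => //.
  by rewrite /K' (asboolT Pk).
move: Hk; rewrite /K'; case: (pselect (P k)) => [Pk|nPk].
  by rewrite (asboolT Pk); apply: HP.
by rewrite (asboolF nPk); apply: HP.
Qed.


Lemma pi0 (R0 : comPzRingType) (J : ideal R0) : \pi_(rquot J) 0 = 0.
Proof. by rewrite piE. Qed.
Lemma piD (R0 : comPzRingType) (J : ideal R0) (x y : R0) :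
  \pi_(rquot J) (x + y) = \pi_(rquot J) x + \pi_(rquot J) y.
Proof. exact: rq_pi_add. Qed.
Lemma piM (R0 : comPzRingType) (J : ideal R0) (x y : R0) :
  \pi_(rquot J) (x * y) = \pi_(rquot J) x * \pi_(rquot J) y.
Proof. exact: rq_pi_mul. Qed.

Lemma quot_avoid (R0 : comPzRingType) (J0 : ideal R0) :
  avoidance_ring R0 -> avoidance_ring (rquot J0).
Proof.
move=> HR J [HJ0 HJD HJM] n K HK HJK.
pose pre (A : set (rquot J0)) := [set x : R0 | A (\pi_(rquot J0) x)].
have Hpre : forall A, is_ideal A -> is_ideal (pre A).
  move=> A [A0 AD AM]; split; rewrite /pre /=.
  - by rewrite pi0.
  - by move=> x y Ax Ay; rewrite piD; apply: AD.
  - by move=> r x Ax; rewrite piM; apply: AM.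
have [k Hk] : exists k, pre J `<=` pre (K k).
  apply: (HR _ (Hpre _ (And3 HJ0 HJD HJM))) => [k|x Jx]; first exact: Hpre.
  by have [k _ Kk] := HJK _ Jx; exists k.
exists k => u Ju; rewrite -[u]reprK; apply: Hk; rewrite /pre /= reprK //.
Qed.
Definition ev I (R : I -> comNzRingType) (i : I) : dprod R :=
  fun j => if `[< j = i >] then 1 else 0.

Lemma ev_coord I (R : I -> comNzRingType) (i : I) (x : dprod R) j :
  (ev R i * x) j = if `[< j = i >] then x j else 0.
Proof.
change ((ev R i * x) j) with (ev R i j * x j); rewrite /ev.
by case: ifP => _; rewrite ?mul1r ?mul0r.
Qed.

Lemma lift_ex I (R : I -> comNzRingType) i (r : R i) : exists t : dprod R, t i = r.
Proof.
exists (fun j => match pselect (i = j) with left e => eq_rect i R r j e | right _ => 0 end).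
case: pselect => [e|] //; by rewrite (Prop_irrelevance e erefl).
Qed.

Lemma proj_ideal I (R : I -> comNzRingType) i (J : set (dprod R)) :
  is_ideal J -> is_ideal (fun r : R i => exists2 w, J w & w i = r).
Proof.
move=> [J0 JD JM]; split.
- by exists 0.
- by move=> _ _ [w Jw <-] [w' Jw' <-]; exists (w + w') => //; apply: (JD).
- move=> r _ [w Jw <-]; have [t <-] := lift_ex r.
  by exists (t * w) => //; apply: (JM).
Qed.

Lemma ev_dsum I (R : I -> comNzRingType) i (v : dprod R) : dsum_set R (ev R i * v).
Proof.
rewrite /dsum_set /=; apply: (sub_finite_set _ (finite_set1 i)) => j.
rewrite /Defs.support /= ev_coord; case: (pselect (j = i)) => [->//|ne].
by rewrite (asboolF ne) eqxx.
Qed.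

Lemma finite_in_ideal I (R : I -> comNzRingType) (K : set (dprod R)) :
  is_ideal K -> forall d, dsum_set R d -> (forall i, K (ev R i * d)) -> K d.
Proof.
move=> HK d Hd.
have [s Hs] := (@finite_seqP {classic I} (Defs.support d)).1 Hd.
have : forall j, d j != 0 -> (j : {classic I}) \in s.
  by move=> j Hj; have : Defs.support d j by []; rewrite Hs.
clear Hs Hd; elim: s d => [|i s IH] d Hs Hev.
  have -> : d = 0.
    apply: functional_extensionality_dep => j; apply/eqP.
    by apply: contraT => /Hs.
  by case: HK.
have -> : d = (d - ev R i * d) + ev R i * d by rewrite subrK.
case: (HK) => _ KD KM; apply: (KD) => //; apply: IH.
- move=> j; change ((d - ev R i * d) j) with (d j - (ev R i * d) j); rewrite ev_coord; case: (pselect (j = i)) => [->|ne].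
    by rewrite (asboolT (erefl i)) subrr eqxx.
  rewrite (asboolF ne) subr0 => /Hs; rewrite inE => /orP [/eqP //|//].
- move=> k; have -> : ev R k * (d - ev R i * d) = ev R k * d - ev R i * (ev R k * d).
    by ring.
  by apply: (KD) => //; apply: idN => //; apply: (KM).
Qed.

Lemma prod_avoid I (R : I -> comNzRingType) :
  (forall i : I, avoidance_ring (R i)) ->
  avoidance_ring (rquot (dsum_ideal R)) -> avoidance_ring (dprod R).
Proof.
move=> HRi HQ J HJ n K HK HJK.
apply: contrapT => Hno.
have Hnk : forall k, ~ (J `<=` K k) by move=> k Hk; apply: Hno; exists k.
pose pi := \pi_(rquot (dsum_ideal R)).
have img_ideal : forall A, is_ideal A -> is_ideal [set pi x | x in A].
  move=> A [A0 AD AM]; split.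
  - by exists 0 => //; rewrite /pi pi0.
  - by move=> _ _ [x Ax <-] [y Ay <-]; exists (x + y); [apply: AD | rewrite /pi piD].
  - move=> r _ [x Ax <-]; exists (repr r * x); first exact: AM.
    by rewrite /pi piM reprK.
pose Jq := [set pi x | x in J]; pose Kq k := [set pi x | x in K k].
have [zq [[z0 Jz0 Ez] Hz]] := @avoid_ex _ Jq n Kq (fun k => ~ (Jq `<=` Kq k))
  (img_ideal _ HJ) (HQ _ (img_ideal _ HJ)) (fun k => img_ideal _ (HK k)) (fun k H => H).
subst zq.
pose Jp i := (fun r : R i => exists2 w, J w & w i = r).
pose Kp i k := (fun r : R i => exists2 w, K k w & w i = r).
have HY : forall i, exists y, J y /\ forall k, ~ (Jp i `<=` Kp i k) -> ~ Kp i k (y i).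
  move=> i.
  have [r [[w Jw <-] Hr]] := @avoid_ex _ (Jp i) n (Kp i) (fun k => ~ (Jp i `<=` Kp i k))
    (proj_ideal i HJ) (HRi i _ (proj_ideal i HJ)) (fun k => proj_ideal i (HK k)) (fun k H => H).
  by exists w.
have [Y HYp] := choice HY.
have Hg : forall k, exists o : option I,
    match o with Some i => ~ (Jp i `<=` Kp i k) | None => ~ (Jq `<=` Kq k) end.
  move=> k; case: (pselect (Jq `<=` Kq k)) => HqK; last by exists None.
  apply: contrapT => Hall; apply: (Hnk k).
  have Hi : forall i, Jp i `<=` Kp i k.
    by move=> i; apply: contrapT => Hn; apply: Hall; exists (Some i).
  move=> w Jw.
  have [k0 Kk0 Heq] : Kq k (pi w) by apply: HqK; exists w.
  move/eqP: Heq; rewrite rquot_eqE => /asboolP Hd.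
  have Hd' : dsum_set R (w - k0).
    by rewrite -opprB; apply: (@idN _ (dsum_set R)) => //; exact: dsum_is_ideal.
  have HKk := HK k; case: (HKk) => _ KD KM.
  have -> : w = (w - k0) + k0 by rewrite subrK.
  apply: (KD) => //; apply: finite_in_ideal => // i.
  have -> : ev R i * (w - k0) = ev R i * w - ev R i * k0 by ring.
  apply: (KD); last by apply: idN => //; apply: (KM).
  have [u Ku Eu] : Kp i k (w i) by apply: Hi; exists w.
  have -> : ev R i * w = ev R i * u.
    apply: functional_extensionality_dep => j; rewrite !ev_coord.
    by case: (pselect (j = i)) => [->|ne]; rewrite ?Eu // (asboolF ne).
  exact: KM.
have [g Hgp] := choice Hg.
have Hx : forall m, exists x, [/\ J x, dsum_set R (x - z0) &
    forall k : 'I_n, (k < m)%N -> forall i, g k = Some i -> x i = Y i i].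
  elim=> [|m [x [Jx Dx Cx]]].
    exists z0; split => //; first by rewrite subrr; case: (dsum_is_ideal R).
  case: (ltnP m n) => Hm; last first.
    exists x; split => // k Hk; apply: Cx.
    by move: (ltn_ord k) => ?; apply: leq_trans Hm.
  pose k0 := Ordinal Hm.
  case Eg: (g k0) => [i|]; last first.
    exists x; split => // k; rewrite ltnS leq_eqVlt => /orP [/eqP Ek|Hk]; last exact: Cx.
    have -> : k = k0 by apply: val_inj.
    by move=> i; rewrite Eg.
  exists (x - ev R i * x + ev R i * Y i); split.
  - case: (HJ) => _ JD JM; apply: (JD); last by apply: (JM); case: (HYp i).
    by apply: (JD) => //; apply: (idN HJ); apply: (JM).
  - have -> : x - ev R i * x + ev R i * Y i - z0 = (x - z0) + ev R i * (Y i - x) by ring.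
    by case: (dsum_is_ideal R) => _ DD _; apply: (DD) => //; apply: ev_dsum.
  - move=> k Hk i' Ei'.
    change ((x - ev R i * x + ev R i * Y i) i') with (x i' - (ev R i * x) i' + (ev R i * Y i) i').
    rewrite !ev_coord; case: (pselect (i' = i)) => [Eii|ne].
      by subst i'; rewrite (asboolT (erefl i)) subrr add0r.
    rewrite (asboolF ne) subr0 addr0; apply: (Cx k _ i' Ei').
    move: Hk; rewrite ltnS leq_eqVlt => /orP [/eqP Ek|//].
    have Ekk : k = k0 by apply: val_inj.
    by move: Ei'; rewrite Ekk Eg => -[Eq]; case: ne.
have [x [Jx Dx Cx]] := Hx n.
have [k _ Kx] := HJK _ Jx.
move: (Hgp k); case Egk: (g k) => [i|] Hk.
  have := (HYp i).2 k Hk; apply; rewrite -(Cx k (ltn_ord k) i Egk); by exists x.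
apply: (Hz k Hk); rewrite -/pi.
have -> : pi z0 = pi x.
  apply/eqP; rewrite rquot_eqE; apply/asboolP.
  by rewrite -opprB; apply: (@idN _ (dsum_set R)) => //; exact: dsum_is_ideal.
by exists x.
Qed.

Theorem corollary3p12 (I : Type) (R : I -> comNzRingType) :
  (forall i : I, avoidance_ring (R i)) ->
  (avoidance_ring (dprod R) <-> avoidance_ring (rquot (dsum_ideal R))).
Proof.
move=> HRi; split; first exact: quot_avoid.
exact: prod_avoid.
Qed.
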